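(* Let $X$ and $Y$ be topological spaces that are $T_1$ and regular, let $X$ be submetrizable, and let $f\colon X \to Y$ be a continuous surjective map which is closed and sequence-covering. Then $f$ is 1-sequence-covering.
   Context: A topological space $\langle X,\tau_X\rangle$ is submetrizable if there is a metrizable topology $\sigma$ on $X$ with $\sigma\subseteq\tau_X$ (equivalently, $X$ admits a continuous one-to-one map onto a metrizable space). A map is closed if images of closed sets are closed. For a space $Z$ and $z\in Z$, let $\mathsf{ConvSeq}(Z,z)$ denote the set of non-trivial (i.e. not eventually constant) sequences in $Z$ converging to $z$, and $\mathsf{ConvSeq}(Z)=\bigcup_{z\in Z}\mathsf{ConvSeq}(Z,z)$. For sequences $q=\langle q(n)\rangle_{n\in\omega}$ in $X$ and $p=\langle p(n)\rangle_{n\in\omega}$ in $Y$, say $q$ covers $p$ if $f(q(n))=p(n)$ for all $n\in\omega$. The map $f$ is sequence-covering if for every $p\in\mathsf{ConvSeq}(Y)$ there is $q\in\mathsf{ConvSeq}(X)$ covering $p$. The map $f$ is 1-sequence-covering if for every $y\in Y$ there is $x\in f^{-1}(y)$ such that for every $p\in\mathsf{ConvSeq}(Y,y)$ there is $q\in\mathsf{ConvSeq}(X,x)$ covering $p$. *)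

(* Defs.v *)
From HB Require Import structures.
From mathcomp Require Import all_boot all_order.
From mathcomp Require Import all_classical topology.
From Stdlib Require Import Reals.
Set Implicit Arguments. Unset Strict Implicit. Unset Printing Implicit Defensive.
Local Open Scope classical_set_scope.

Definition is_metric (X : Type) (d : X -> X -> R) : Prop :=
  [/\ (forall x y, (0 <= d x y)%R),
      (forall x y, d x y = 0%R <-> x = y),
      (forall x y, d x y = d y x) &
      (forall x y z, (d x z <= d x y + d y z)%R)].

Definition metric_open (X : Type) (d : X -> X -> R) (A : set X) : Prop :=
  forall x, A x -> exists e : R, (0 < e)%R /\ (forall y, (d x y < e)%R -> A y).

Definition submetrizable (X : topologicalType) : Prop :=
  exists d : X -> X -> R, is_metric d /\
    (forall A : set X, metric_open d A -> open A).

Definition closed_map (X Y : topologicalType) (f : X -> Y) : Prop :=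
  forall A : set X, closed A -> closed (f @` A).

Definition ConvSeq (Z : topologicalType) (z : Z) (p : nat -> Z) : Prop :=
  p @ \oo --> z /\ ~ (exists (N : nat) (c : Z), forall n, (N <= n)%N -> p n = c).

Definition covers (X Y : Type) (f : X -> Y) (q : nat -> X) (p : nat -> Y) : Prop :=
  forall n, f (q n) = p n.

Definition sequence_covering (X Y : topologicalType) (f : X -> Y) : Prop :=
  forall (y : Y) (p : nat -> Y), ConvSeq y p ->
    exists (x : X) (q : nat -> X), ConvSeq x q /\ covers f q p.

Definition one_sequence_covering (X Y : topologicalType) (f : X -> Y) : Prop :=
  forall y : Y, exists x : X, f x = y /\
    forall p : nat -> Y, ConvSeq y p ->
      exists q : nat -> X, ConvSeq x q /\ covers f q p.

(* Main.v *)
Require Import Defs.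
From mathcomp Require Import all_boot all_order all_classical topology.
From Stdlib Require Import Reals Lra Classical.
From mathcomp Require Import zify.
Set Implicit Arguments. Unset Strict Implicit. Unset Printing Implicit Defensive.
Local Open Scope classical_set_scope.


Definition eps (k : nat) : R := Rinv (INR k.+1).

Lemma eps_pos k : (0 < eps k)%R.
Proof. apply: Rinv_0_lt_compat; apply: lt_0_INR; apply/ltP. by []. Qed.

Lemma eps_le k K : (k <= K)%N -> (eps K <= eps k)%R.
Proof.
move=> h; apply: Rinv_le_contravar; first by apply: lt_0_INR; apply/ltP.
apply: le_INR; apply/leP; by [].
Qed.

Lemma eps_half k : (eps (k + k).+1 + eps (k + k).+1 = eps k)%R.
Proof.
rewrite /eps.
have -> : INR (k + k).+2 = (2 * INR k.+1)%R.
  rewrite -addSn -addnS.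
  change (INR (Nat.add k.+1 k.+1) = (2 * INR k.+1)%R).
  rewrite plus_INR; lra.
have := eps_pos k; rewrite /eps => h.
have hk : (INR k.+1 <> 0)%R by apply: not_0_INR.
field; exact: hk.
Qed.

Lemma eps_small r : (0 < r)%R -> exists k, (eps k < r)%R.
Proof.
move=> /archimed_cor1 [N [h1 h2]].
exists N; apply: Rle_lt_trans h1; apply: Rinv_le_contravar.
  by apply: lt_0_INR.
by apply: le_INR; apply/leP.
Qed.

Definition conv (T : topologicalType) (a : nat -> T) (t : T) :=
  forall U, nbhs t U -> exists N, forall n, (N <= n)%N -> U (a n).

Lemma cvg_nat (T : topologicalType) (a : nat -> T) t :
  a @ \oo --> t <-> conv a t.
Proof.
split=> H.
  move=> U /H [N _ HN]; exists N => n hn; exact: HN.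
move=> U /H [N HN]; exists N => // n hn; exact: HN.
Qed.

Lemma conv_ext (T : topologicalType) (a b : nat -> T) t :
  (forall n, a n = b n) -> conv a t -> conv b t.
Proof. move=> e H U /H [N HN]; exists N => n /HN; by rewrite e. Qed.

Lemma cont_seq (X Y : topologicalType) (f : X -> Y) (q : nat -> X) x :
  continuous f -> conv q x -> conv (fun n => f (q n)) (f x).
Proof.
move=> cf cq V nV.
have : nbhs x (f @^-1` V) by exact: (cf x V nV).
move=> /cq [N HN]; exists N => n /HN; by [].
Qed.

Lemma lim_unique (Y : topologicalType) (b : nat -> Y) y y' :
  accessible_space Y -> regular_space Y -> conv b y -> conv b y' -> y = y'.
Proof.
move=> acc reg cy cy'.
apply: NNPP => ne.
have /acc [A [oA yA y'A]] : y != y' by apply/eqP.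
have nA : nbhs y A by apply: open_nbhs_nbhs; split => //; rewrite -in_setE.
have [C nC sC] := reg y A nA.
have : closure C y'.
  move=> B nB.
  have [N1 H1] := cy C nC.
  have [N2 H2] := cy' B nB.
  exists (b (N1 + N2)); split.
    by apply: H1; rewrite leq_addr.
  by apply: H2; rewrite leq_addl.
move=> /sC; move: y'A; rewrite in_setE /=; by [].
Qed.

Lemma ball_nbhs (X : topologicalType) (d : X -> X -> R) x e :
  is_metric d -> (forall A : set X, metric_open d A -> open A) ->
  (0 < e)%R -> nbhs x [set w | (d x w < e)%R].
Proof.
move=> [d0 dz ds dt] sub he; apply: open_nbhs_nbhs; split.
  apply: sub => w /= hw; exists (e - d x w)%R; split; first lra.
  move=> v hv /=; have := dt x w v; lra.
by rewrite /= (proj2 (dz x x) erefl).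
Qed.

Lemma avoid (X : topologicalType) (a : nat -> X) z :
  accessible_space X -> (forall j, a j <> z) ->
  forall N, exists O : set X, [/\ open O, O z & forall j, (j < N)%N -> ~ O (a j)].
Proof.
move=> acc ne; elim=> [|N [O [oO Oz HO]]].
  by exists setT; split => //; exact: openT.
have /acc [A [oA zA aA]] : z != a N by apply/eqP => e; apply: (ne N); rewrite e.
exists (O `&` A); split.
- exact: openI.
- by split => //; rewrite -in_setE.
- move=> j; rewrite ltnS leq_eqVlt => /orP [/eqP -> | hj] [h1 h2].
    by move: aA; rewrite in_setE.
  exact: (HO j hj h1).
Qed.

Lemma closure_seq (X : topologicalType) (d : X -> X -> R) (a : nat -> X)
  (S : set nat) z :
  is_metric d -> (forall A : set X, metric_open d A -> open A) ->
  accessible_space X -> closure (a @` S) z -> (forall j, a j <> z) ->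
  forall e, (0 < e)%R -> forall N, exists j, [/\ (N <= j)%N, S j & (d (a j) z < e)%R].
Proof.
move=> met sub acc cl ne e he N.
apply: NNPP => Hn.
have [O [oO Oz HO]] := avoid acc ne N.
have nB := ball_nbhs z met sub he.
have nO : nbhs z O by apply: open_nbhs_nbhs.
have [w [[j Sj <-] [Oaj Baj]]] := cl _ (filterI nO nB).
case: (ltnP j N) => hj; first exact: (HO j hj Oaj).
apply: Hn; exists j; split => //.
by case: met => _ _ ds _; rewrite ds.
Qed.

Lemma closed_hit (X Y : topologicalType) (f : X -> Y) (a : nat -> X)
  (S : set nat) y :
  closed_map f -> conv (fun n => f (a n)) y ->
  (forall N, exists n, (N <= n)%N /\ S n) ->
  exists z, closure (a @` S) z /\ f z = y.
Proof.
move=> cm cy inf.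
have C : closed (f @` closure (a @` S)) by apply: cm; exact: closed_closure.
have : closure (f @` closure (a @` S)) y.
  move=> V nV.
  have [N HN] := cy V nV.
  have [n [hn Sn]] := inf N.
  exists (f (a n)); split; last exact: HN.
  exists (a n) => //; apply: subset_closure; by exists n.
rewrite -(proj1 (closure_id _) C) => -[z hz fz]; by exists z.
Qed.

Definition W (X Y : Type) (f : X -> Y) (d : X -> X -> R) (y : Y) (p : nat -> Y) (x : X) :=
  f x = y /\ forall k, exists N, forall n, (N <= n)%N ->
     exists w, f w = p n /\ (d w x < eps k)%R.

Lemma F1 (X Y : topologicalType) (f : X -> Y) d y p q x :
  is_metric d -> (forall A : set X, metric_open d A -> open A) ->
  conv q x -> covers f q p -> f x = y -> W f d y p x.
Proof.
move=> met sub cq cov fx; split => // k.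
have [N HN] := cq _ (ball_nbhs x met sub (eps_pos k)).
exists N => n /HN /= h; exists (q n); split => //.
by case: met => _ _ ds _; rewrite ds.
Qed.

Lemma F3 (X Y : Type) (f : X -> Y) d y p z :
  is_metric d -> f z = y ->
  (forall k, exists x, W f d y p x /\ (d x z < eps k)%R) -> W f d y p z.
Proof.
move=> [d0 dz ds dt] fz H; split => // k.
have [x [[_ Wx] hx]] := H (k + k).+1.
have [N HN] := Wx (k + k).+1.
exists N => n /HN [w [fw hw]]; exists w; split => //.
have := dt w x z; have := eps_half k; lra.
Qed.

Lemma nontriv_ex (Y : Type) (p : nat -> Y) y :
  ~ (exists (N : nat) (c : Y), forall n, (N <= n)%N -> p n = c) ->
  forall N, exists n, (N <= n)%N /\ p n <> y.
Proof.
move=> nt N; apply: NNPP => H; apply: nt; exists N, y => n hn.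
apply: NNPP => ne; apply: H; by exists n.
Qed.

Lemma F2 (X Y : topologicalType) (f : X -> Y) d y p x :
  is_metric d -> (forall A : set X, metric_open d A -> open A) ->
  accessible_space X -> closed_map f -> (forall y : Y, exists x : X, f x = y) ->
  ConvSeq y p -> W f d y p x -> exists q, ConvSeq x q /\ covers f q p.
Proof.
move=> met sub acc cm surj [cp nt] [fx Wx].
have met' := met; case: met' => d0 dz ds dt.
have Hc : forall n, exists w, [/\ f w = p n, p n = y -> w = x &
    forall k, (k <= n)%N -> (exists w', f w' = p n /\ (d w' x < eps k)%R) ->
      (d w x < eps k)%R].
  move=> n; case: (classic (p n = y)) => e.
    exists x; split; [by rewrite fx e | by [] | move=> k _ _]; rewrite (proj2 (dz x x) erefl); exact: eps_pos.
  suff: forall m, exists w, f w = p n /\ forall k, (k <= m)%N ->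
     (exists w', f w' = p n /\ (d w' x < eps k)%R) -> (d w x < eps k)%R.
    move=> /(_ n) [w [fw Hw]]; by exists w; split.
  elim=> [|m [w [fw Hw]]].
    case: (classic (exists w', f w' = p n /\ (d w' x < eps 0)%R)) => [[w' [fw' hw']]|nS].
      exists w'; split => // k; rewrite leqn0 => /eqP -> _; by [].
    have [w fw] := surj (p n); exists w; split => // k; rewrite leqn0 => /eqP -> //.
  case: (classic (exists w', f w' = p n /\ (d w' x < eps m.+1)%R)) => [[w' [fw' hw']]|nS].
    exists w'; split => // k hk _; exact: (Rlt_le_trans _ _ _ hw' (eps_le hk)).
  exists w; split => // k; rewrite leq_eqVlt => /orP [/eqP -> //|hk]; exact: Hw.
have [q Hq] := choice Hc.
have cov : covers f q p by move=> n; case: (Hq n).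
exists q; split => //; split.
  apply/cvg_nat => U nU; apply: NNPP => Hn.
  have inf : forall N, exists n, (N <= n)%N /\ ~ U (q n).
    move=> N; apply: NNPP => H; apply: Hn; exists N => n hn.
    apply: NNPP => nu; apply: H; by exists n.
  have cfq : conv (fun n => f (q n)) y.
    apply: (conv_ext (a := p)); first by move=> n; rewrite cov.
    by apply/cvg_nat.
  have [z [cz fz]] := closed_hit cm cfq inf.
  have zx : z <> x.
    move=> e; rewrite e in cz; have [w [[j Sj <-] Uj]] := cz U nU; exact: Sj.
  have qz : forall j, q j <> z.
    move=> j e; apply: zx; rewrite -e; case: (Hq j) => _ h _; apply: h.
    by rewrite -cov e.
  have dpos : (0 < d z x)%R.
    have := d0 z x; have : d z x <> 0%R by move=> /dz.
    lra.
  have [k hk] := eps_small (Rmult_lt_0_compat _ _ dpos (Rinv_0_lt_compat 2 ltac:(lra))).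
  have [N0 HN0] := Wx k.
  have [j [hj Sj hdj]] := closure_seq met sub acc cz qz (eps_pos k) (N0 + k).
  have hqx : (d (q j) x < eps k)%R.
    case: (Hq j) => _ _; apply.
      by apply: leq_trans hj; rewrite leq_addl.
    apply: HN0; by apply: leq_trans hj; rewrite leq_addr.
  have := dt z (q j) x; rewrite ds in hdj; lra.
move=> [N [c Hc']]; apply: nt; exists N, (f c) => n hn; by rewrite -cov Hc'.
Qed.

Lemma F4 (X Y : topologicalType) (f : X -> Y) d y p (xs : nat -> X) :
  is_metric d -> (forall A : set X, metric_open d A -> open A) ->
  accessible_space X -> closed_map f ->
  ConvSeq y p -> (forall j, W f d y p (xs j)) ->
  exists z, f z = y /\ forall k N, exists j, (N <= j)%N /\ (d (xs j) z < eps k)%R.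
Proof.
move=> met sub acc cm [cp nt] Wall.
have met' := met; case: met' => d0 dz ds dt.
have Hc : forall j, exists na : nat * X, [/\ (j <= na.1)%N, p na.1 <> y,
   f na.2 = p na.1 & (d na.2 (xs j) < eps j)%R].
  move=> j; have [_ Wj] := Wall j; have [N HN] := Wj j.
  have [n [hn pn]] := nontriv_ex y nt (N + j).
  have [w [fw hw]] := HN n (leq_trans (leq_addr _ _) hn).
  exists (n, w); split => //=; exact: leq_trans (leq_addl _ _) hn.
have [g Hg] := choice Hc.
move/cvg_nat: cp => cp.
have cfa : conv (fun j => f (g j).2) y.
  move=> V nV; have [N HN] := cp V nV; exists N => j hj.
  case: (Hg j) => h1 _ -> _; apply: HN; exact: leq_trans hj h1.
have [z [cz fz]] := closed_hit (S := setT) cm cfa (fun N => ex_intro _ N (conj (leqnn N) I)).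
exists z; split => // k N.
have ne : forall j, (g j).2 <> z.
  move=> j e; case: (Hg j) => _ h2 h3 _; apply: h2; by rewrite -h3 e.
have [j [hj _ hd]] := closure_seq met sub acc cz ne (eps_pos (k + k).+1) (N + (k + k).+1).
exists j; split; first exact: leq_trans (leq_addr _ _) hj.
case: (Hg j) => _ _ _ h4.
have := eps_le (leq_trans (leq_addl _ _) hj).
have := dt (xs j) (g j).2 z; have := ds (xs j) (g j).2.
have := eps_half k; lra.
Qed.

Definition inter (Y : Type) (p1 p2 : nat -> Y) (n : nat) : Y :=
  if odd n then p2 n./2 else p1 n./2.

Lemma inter_even (Y : Type) (p1 p2 : nat -> Y) n : inter p1 p2 n.*2 = p1 n.
Proof. by rewrite /inter odd_double doubleK. Qed.

Lemma inter_odd (Y : Type) (p1 p2 : nat -> Y) n : inter p1 p2 n.*2.+1 = p2 n.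
Proof. rewrite /inter /= odd_double /=; congr p2; lia. Qed.

Lemma F5 (X Y : topologicalType) (f : X -> Y) d y p1 p2 :
  ConvSeq y p1 -> ConvSeq y p2 ->
  ConvSeq y (inter p1 p2) /\
  (forall x, W f d y (inter p1 p2) x -> W f d y p1 x /\ W f d y p2 x).
Proof.
move=> [c1 nt1] [c2 _]; split; [split|].
- move/cvg_nat: c1 => c1; move/cvg_nat: c2 => c2; apply/cvg_nat => U nU.
  have [N1 H1] := c1 U nU; have [N2 H2] := c2 U nU.
  exists (N1 + N2).*2 => n hn; rewrite /inter; case: ifP => _.
    apply: H2; lia.
  apply: H1; lia.
- move=> [N [c Hc]]; apply: nt1; exists N, c => n hn.
  rewrite -(inter_even p1 p2); apply: Hc; lia.
- move=> x [fx Wx]; split; split => // k; have [N HN] := Wx k; exists N => n hn.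
    rewrite -(inter_even p1 p2); apply: HN; lia.
  rewrite -(inter_odd p1 p2); apply: HN; lia.
Qed.

Lemma bad_of (X Y : topologicalType) (f : X -> Y) d y x :
  is_metric d -> f x = y -> ~ (forall p, ConvSeq y p -> W f d y p x) ->
  exists p K, ConvSeq y p /\ forall z, (d z x < eps K)%R -> ~ W f d y p z.
Proof.
move=> [d0 dz ds dt] fx H.
have [p [cp nW]] : exists p, ConvSeq y p /\ ~ W f d y p x.
  apply: NNPP => H'; apply: H => p cp; apply: NNPP => nW; apply: H'; by exists p.
have [k nk] : exists k, ~ (exists N, forall n, (N <= n)%N ->
     exists w, f w = p n /\ (d w x < eps k)%R).
  apply: NNPP => H'; apply: nW; split => // k; apply: NNPP => h; apply: H'; by exists k.
exists p, (k + k).+1; split => // z hz [fz Wz].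
have [N HN] := Wz (k + k).+1.
apply: nk; exists N => n hn; have [w [fw hw]] := HN n hn; exists w; split => //.
have := dt w z x; have := eps_half k; lra.
Qed.

Lemma min_ex (Q : nat -> Prop) :
  (exists k, Q k) -> exists k, Q k /\ forall k', Q k' -> (k <= k')%N.
Proof.
move=> [n Qn]; apply: NNPP => H.
suff: forall m k, (k <= m)%N -> ~ Q k by move/(_ n n (leqnn n)).
elim=> [|m IH] k hk Qk.
  move: hk; rewrite leqn0 => /eqP e; subst k.
  by apply: H; exists 0; split.
case: (leqP k m) => hkm; first exact: (IH k hkm Qk).
have ek : k = m.+1 by apply/eqP; rewrite eqn_leq hk hkm.
apply: H; exists k; split => // k' Qk'.
case: (leqP k k') => // hk'; exfalso; apply: (IH k'); last by [].
by rewrite -ltnS -ek.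
Qed.

Theorem mainTheorem1 (X Y : topologicalType) (f : X -> Y) :
  accessible_space X -> regular_space X ->
  accessible_space Y -> regular_space Y ->
  submetrizable X ->
  continuous f -> (forall y : Y, exists x : X, f x = y) ->
  closed_map f -> sequence_covering f ->
  one_sequence_covering f.
Proof.
move=> accX regX accY regY [d [met sub]] cf surj cm sc y.
have met' := met; case: met' => d0 dz ds dt.
case: (classic (exists x, f x = y /\ forall p, ConvSeq y p -> W f d y p x))
  => [[x [fx Hx]]|Hng].
  exists x; split => // p cp; exact: (F2 met sub accX cm surj cp (Hx p cp)).
exfalso.
have bad : forall x, f x = y -> exists p K, ConvSeq y p /\
    forall z, (d z x < eps K)%R -> ~ W f d y p z.
  move=> x fx; apply: bad_of => // H; apply: Hng; by exists x.
have nonempty : forall P, ConvSeq y P -> exists x, W f d y P x.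
  move=> P cP; have [x [q [cq cov]]] := sc y P cP.
  case: cq => /cvg_nat cq _.
  have fx : f x = y.
    apply: (lim_unique accY regY (cont_seq cf cq)).
    apply: (conv_ext (a := P)); first by move=> n; rewrite cov.
    by case: cP => /cvg_nat.
  exists x; exact: F1 met sub cq cov fx.
have [x0 fx0] := surj y.
case: (classic (exists p0, ConvSeq y p0)) => [[p0 cp0]|np]; last first.
  apply: Hng; exists x0; split => // p cp; exfalso; apply: np; by exists p.
pose Spec P (t : X * nat * (nat -> Y)) := ConvSeq y P ->
  [/\ W f d y P t.1.1, ConvSeq y t.2,
      (forall z, (d z t.1.1 < eps t.1.2)%R -> ~ W f d y t.2 z) &
      (forall x' k' p', W f d y P x' -> ConvSeq y p' ->
          (forall z, (d z x' < eps k')%R -> ~ W f d y p' z) -> (t.1.2 <= k')%N)].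
have Hg : forall P, exists t, Spec P t.
  move=> P; case: (classic (ConvSeq y P)) => cP; last by exists (x0, 0, p0).
  have ex : exists k, exists x' p', W f d y P x' /\ ConvSeq y p' /\
      forall z, (d z x' < eps k)%R -> ~ W f d y p' z.
    have [x' Wx'] := nonempty P cP.
    have [p' [K [cp' bp']]] := bad x' (proj1 Wx').
    by exists K, x', p'.
  have [k [[x' [p' [Wx' [cp' bx']]]] mk]] := min_ex ex.
  exists (x', k, p') => _; split => //= x'' k'' p'' W'' c'' b''.
  apply: mk; by exists x'', p''.
have [g Hg'] := choice Hg.
pose P m := iter m (fun Q => inter Q (g Q).2) p0.
have cP : forall m, ConvSeq y (P m).
  elim=> [|m IH] //=.
  have [_ c2 _ _] := Hg' (P m) IH; exact: (F5 f d IH c2).1.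
have WP : forall m j, (m <= j)%N -> forall x, W f d y (P j) x -> W f d y (P m) x.
  move=> m j; elim: j => [|j IH].
    by rewrite leqn0 => /eqP ->.
  rewrite leq_eqVlt => /orP [/eqP -> //| hm] x Wx.
  apply: (IH hm).
  have [_ c2 _ _] := Hg' (P j) (cP j).
  exact: (((F5 f d (cP j) c2).2 x Wx).1).
pose xs m := (g (P m)).1.1.
pose ks m := (g (P m)).1.2.
have Wxs : forall m, W f d y (P m) (xs m).
  by move=> m; have [h _ _ _] := Hg' (P m) (cP m).
have sep : forall m j, (m < j)%N -> (eps (ks m) <= d (xs j) (xs m))%R.
  move=> m j hmj; apply: Rnot_lt_le => hlt.
  have [_ c2 b _] := Hg' (P m) (cP m).
  apply: (b _ hlt).
  have := WP m.+1 j hmj _ (Wxs j).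
  move=> Wi; exact: (((F5 f d (cP m) c2).2 _ Wi).2).
have [z [fz cl]] := F4 met sub accX cm (cP 0) (fun j => WP 0 j (leq0n j) _ (Wxs j)).
have Wz : forall m, W f d y (P m) z.
  move=> m; apply: (F3 met fz) => k; have [j [hj hd]] := cl k m.
  exists (xs j); split => //; exact: WP m j hj _ (Wxs j).
have [p' [K [cp' bz]]] := bad z fz.
have kle : forall m, (ks m <= K)%N.
  move=> m; have [_ _ _ mn] := Hg' (P m) (cP m); exact: mn z K p' (Wz m) cp' bz.
have [j1 [_ h1]] := cl (K + K).+1 0.
have [j2 [h2 h2']] := cl (K + K).+1 j1.+1.
have := sep j1 j2 h2.
have := eps_le (kle j1).
have := dt (xs j2) z (xs j1); have := ds z (xs j1).
have := eps_half K; lra.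
Qed.
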